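(* Fix a student with strict utilities $u$ over $C$ and a ROL $R$ such that, for every state $\omega$ with $B(\omega)\neq\emptyset$, the assigned school $\alpha_R(\omega)$ is defined and equals the $u$-best school in $B(\omega)$. Assume the feasible sets $B(\omega)$ do not depend on the student's own ROL. Then: (i) For any ROL $R'$, $\alpha_{R'}(\omega)$ is the $u$-best school in $B(\omega)$ for every state $\omega$ with $B(\omega)\ne\emptyset$ if and only if $R'\in\mathcal R^*(R)$. (ii) $\mathcal P^{all}(R')=\mathcal P^{all}(R)$ for every $R'\in\mathcal R^*(R)$. (iii) For any strict utility vector $u'$ on $C$ and any ROL $R''$ such that $\alpha_{R''}(\omega)$ is the $u'$-best school of $B(\omega)$ for every $\omega$ with $B(\omega)\ne\emptyset$, we have $\mathcal P^{all}(R'')=\mathcal P^{all}(R)$ if and only if $u'\in\mathcal U^*(R)$.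
   Context: Setting: finite set of schools $C$ (no outside option). $(\Omega,\Pr)$ is a probability space of states; each state determines the student's feasible set $B(\omega)\subseteq C$, taking finitely many values. A ROL is an ordered list of distinct schools of $C$. For a ROL $R$, the assigned school $\alpha_R(\omega)$ is the highest-ranked school of $R$ in $B(\omega)$ (undefined if none). $\tilde{\mathcal P}(R)=\{(\alpha_R(\omega),c):\omega\in\Omega,\ \alpha_R(\omega)\text{ defined},\ c\in B(\omega)\setminus\{\alpha_R(\omega)\}\}$ ($(x,y)$ meaning ''$x$ inferred preferred to $y$''), and $\mathcal P^{all}(R)$ is the transitive closure of $\tilde{\mathcal P}(R)$. $\mathcal R^*(R)$ is the set of ROLs $R'$ such that (1) every ever-assigned school $\alpha_R(\omega)$ (over all $\omega$) is listed in $R'$, and (2) there are no schools $c,c'$ with $c'$ listed above $c$ in $R'$ and $(c,c')\in\mathcal P^{all}(R)$. For a strict utility vector $u'$, $\rho(u')$ is the ROL listing all schools of $C$ in decreasing order of $u'$; $\mathcal U^*(R)$ is the set of strict utility vectors $u'$ with $\rho(u')\in\mathcal R^*(R)$. *)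

(* Defs.v *)
From HB Require Import structures.
From mathcomp Require Import all_boot all_order all_algebra.
From Stdlib Require Import Relations.
Set Implicit Arguments. Unset Strict Implicit. Unset Printing Implicit Defensive.
Import Order.TTheory GRing.Theory Num.Theory.
Local Open Scope ring_scope.

Section SchoolChoice.
Variables (C : finType) (Omega : Type) (B : Omega -> {set C}).

Definition is_ROL (R : seq C) : bool := uniq R.

(* Assigned school: highest-ranked school of R lying in B w (None = undefined). *)
Definition alpha (R : seq C) (w : Omega) : option C :=
  ohead [seq c <- R | c \in B w].

Definition best (U : realDomainType) (u : C -> U) (S : {set C}) (c : C) : Prop :=
  c \in S /\ forall c', c' \in S -> c' != c -> u c' < u c.

Definition strict_util (U : realDomainType) (u : C -> U) : Prop := injective u.

Definition Ptilde (R : seq C) (x y : C) : Prop :=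
  exists w, alpha R w = Some x /\ y \in B w /\ y != x.

Definition Pall (R : seq C) : relation C := clos_trans C (Ptilde R).

Definition Rstar (R R' : seq C) : Prop :=
  [/\ is_ROL R',
      (forall w c, alpha R w = Some c -> c \in R') &
      ~ (exists c c', [/\ c \in R', c' \in R', (index c' R' < index c R')%N
                        & Pall R c c'])].

Definition rho (U : realDomainType) (u : C -> U) : seq C :=
  sort (fun x y => u y <= u x) (enum C).

Definition Ustar (U : realDomainType) (R : seq C) (u : C -> U) : Prop :=
  strict_util u /\ Rstar R (rho u).

Definition assigns_best (U : realDomainType) (u : C -> U) (R : seq C) : Prop :=
  forall w, B w != set0 -> exists c, alpha R w = Some c /\ best u (B w) c.

End SchoolChoice.

(* Main.v *)
Require Import Defs.
From mathcomp Require Import all_boot all_order all_algebra.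
From Stdlib Require Import Relations.
Import Order.TTheory GRing.Theory Num.Theory.
Local Open Scope ring_scope.
Set Implicit Arguments. Unset Strict Implicit.

Section Aux.
Variables (C : finType) (Omega : Type) (B : Omega -> {set C}) (U : realDomainType).

Lemma alpha_some (R : seq C) w c : alpha B R w = Some c ->
  [/\ c \in R, c \in B w & forall d, d \in R -> d \in B w -> (index c R <= index d R)%N].
Proof.
rewrite /alpha; elim: R => //= x R IH.
case: ifP => xB /=.
  by case=> <-; split; rewrite ?mem_head // => d _ _; rewrite eqxx.
move/IH=> [cR cB H]; split; rewrite ?inE ?cR ?orbT //.
have cx : (x == c) = false by apply/negbTE; apply: contraFN xB => /eqP ->.
rewrite cx => d; rewrite inE => /orP[/eqP -> | dR dB]; first by rewrite xB.
have dx : (x == d) = false by apply/negbTE; apply: contraFN xB => /eqP ->.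
by rewrite dx ltnS H.
Qed.

Lemma alpha_none (R : seq C) w : alpha B R w = None -> forall d, d \in R -> d \notin B w.
Proof.
rewrite /alpha; elim: R => //= x R IH.
case: ifP => //= xB /IH H d; rewrite inE => /orP[/eqP -> | ]; first by rewrite xB.
exact: H.
Qed.

Lemma best_uniq (u : C -> U) S c d : best u S c -> best u S d -> c = d.
Proof.
move=> [cS Hc] [dS Hd]; case: (eqVneq c d) => // cd.
have h2 := Hc d dS (contra_neq (fun x => esym x) cd).
have h1 := Hd c cS cd.
by have := lt_trans h1 h2; rewrite ltxx.
Qed.

Lemma alpha_eq (u : C -> U) R R' w : assigns_best B u R -> assigns_best B u R' ->
  alpha B R w = alpha B R' w.
Proof.
move=> HR HR'.
case E: (alpha B R w) => [c|].
  have [_ cB _] := alpha_some E.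
  have ne : B w != set0 by apply/set0Pn; exists c.
  have [c1 [E1 b1]] := HR w ne; have [c2 [E2 b2]] := HR' w ne.
  by rewrite E1 in E; case: E => <-; rewrite E2 (best_uniq b1 b2).
case E': (alpha B R' w) => [d|] //.
have [_ dB _] := alpha_some E'.
have ne : B w != set0 by apply/set0Pn; exists d.
by have [c1 [E1 _]] := HR w ne; rewrite E1 in E.
Qed.

Lemma Pall_ext R R' : (forall w, alpha B R w = alpha B R' w) ->
  forall x y, Pall B R x y -> Pall B R' x y.
Proof.
move=> H x y; elim=> [a b [w [E [bB ba]]]|a b c _ IH1 _ IH2].
  by apply: t_step; exists w; rewrite -H.
exact: t_trans IH1 IH2.
Qed.

Lemma Pall_lt (u : C -> U) R : assigns_best B u R -> forall x y, Pall B R x y -> u y < u x.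
Proof.
move=> HR x y; elim=> [a b [w [E [bB ba]]]|a b c _ IH1 _ IH2].
  have [_ aB _] := alpha_some E.
  have ne : B w != set0 by apply/set0Pn; exists a.
  have [c1 [E1 [_ H]]] := HR w ne; rewrite E1 in E; case: E => ?; subst c1.
  exact: H.
exact: lt_trans IH2 IH1.
Qed.

Lemma index_neq (R : seq C) x y : x \in R -> x != y -> index x R != index y R.
Proof.
by move=> xR; apply: contra_neq => E; rewrite -(nth_index x xR) E nth_index // -index_mem -E index_mem.
Qed.

Lemma chain (u : C -> U) R R' : assigns_best B u R -> assigns_best B u R' ->
  forall x y, Pall B R x y -> x \in R' /\ (y \in R' -> (index x R' < index y R')%N).
Proof.
move=> HR HR' x y; elim=> [a b [w [E [bB ba]]]|a b c _ [aR IH1] _ [bR IH2]].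
  rewrite (alpha_eq w HR HR') in E.
  have [aR _ H] := alpha_some E; split=> // bR.
  by rewrite ltn_neqAle H // index_neq // eq_sym.
by split=> // cR; apply: ltn_trans (IH1 bR) (IH2 cR).
Qed.

Lemma Rstar_best (u : C -> U) R R' : assigns_best B u R -> Rstar B R R' -> assigns_best B u R'.
Proof.
move=> HR [uR' inR' noinv] w ne.
have [c [E bc]] := HR w ne.
have cR' := inR' w c E.
case E': (alpha B R' w) => [d|]; last first.
  by have := alpha_none E' cR'; rewrite bc.1.
exists d; split=> //.
have [dR dB H] := alpha_some E'.
case: (eqVneq d c) => [-> // | dc].
exfalso; apply: noinv; exists c, d; split=> //.
  by rewrite ltn_neqAle H ?bc.1 // index_neq.
by apply: t_step; exists w.
Qed.

Lemma rho_index (u : C -> U) x y : (index x (rho u) < index y (rho u))%N -> u y <= u x.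
Proof.
have xr : forall z, z \in rho u by move=> z; rewrite /rho mem_sort mem_enum.
apply: (sorted_ltn_index (leT := fun x y => u y <= u x)) => //.
  by move=> a b c h1 h2; apply: le_trans h2 h1.
apply: sort_sorted => a b; exact: le_total.
Qed.

Lemma rho_uniq (u : C -> U) : uniq (rho u).
Proof. by rewrite /rho sort_uniq enum_uniq. Qed.

Lemma rho_best (u : C -> U) : strict_util u -> assigns_best B u (rho u).
Proof.
move=> inj w /set0Pn [x xB].
have xr : forall z, z \in rho u by move=> z; rewrite /rho mem_sort mem_enum.
case E: (alpha B (rho u) w) => [c|]; last by have := alpha_none E (xr x); rewrite xB.
exists c; split=> //; have [_ cB H] := alpha_some E; split=> // c' c'B c'c.
rewrite lt_neqAle rho_index ?andbT.
  by apply: contra_neq c'c => /inj.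
by rewrite ltn_neqAle H // index_neq // eq_sym.
Qed.

End Aux.

Theorem propositionB1 (C : finType) (Omega : Type) (B : Omega -> {set C})
    (U : realDomainType) (u : C -> U) (R : seq C) :
  strict_util u -> is_ROL R -> assigns_best B u R ->
  (* (i) *)
  (forall R' : seq C, is_ROL R' -> (assigns_best B u R' <-> Rstar B R R')) /\
  (* (ii) *)
  (forall R' : seq C, Rstar B R R' ->
     forall x y, Pall B R' x y <-> Pall B R x y) /\
  (* (iii) *)
  (forall (u' : C -> U) (R'' : seq C), strict_util u' -> is_ROL R'' ->
     assigns_best B u' R'' ->
     ((forall x y, Pall B R'' x y <-> Pall B R x y) <-> Ustar B R u')).
Proof.
move=> su uR HR.
have partI : forall R' : seq C, is_ROL R' -> (assigns_best B u R' <-> Rstar B R R').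
  move=> R' uR'; split; last exact: Rstar_best.
  move=> HR'; split=> //.
    by move=> w c E; rewrite (alpha_eq w HR HR') in E; have [] := alpha_some E.
  move=> [c [c' [cR c'R lt P]]].
  have [_ H] := chain HR HR' P.
  by have := ltn_trans lt (H c'R); rewrite ltnn.
split=> //; split.
  move=> R' HS x y.
  have HR' := Rstar_best HR HS.
  by split; apply: Pall_ext => w; [apply: (alpha_eq w HR' HR) | apply: (alpha_eq w HR HR')].
move=> u' R'' su' uR'' HR''; split.
  move=> Heq; split=> //; split; first exact: rho_uniq.
    by move=> w c _; rewrite /rho mem_sort mem_enum.
  move=> [c [c' [cR c'R lt P]]].
  have h1 := Pall_lt HR'' ((Heq c c').2 P).
  have h2 := rho_index lt.
  by have := lt_le_trans h1 h2; rewrite ltxx.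
move=> [_ HS].
have Hr := Rstar_best HR HS.
have Hr' := @rho_best C Omega B U u' su'.
have E : forall w, alpha B R'' w = alpha B R w.
  by move=> w; rewrite (alpha_eq w HR'' Hr') (alpha_eq w Hr HR).
by move=> x y; split; apply: Pall_ext => w; rewrite E.
Qed.
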